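(* Let $E$ be a theme and let $F\subset E$ be a monogenic sub-$\tilde{\mathcal A}$-module of $E$. Then $F$ is a theme. Moreover, if $F$ is normal in $E$, then the quotient $E/F$ is also a theme.
   Context: $\tilde{\mathcal A}$ denotes the $\mathbb C$-algebra of formal series $\sum_{\nu\ge0}P_\nu(a)b^\nu$ with $P_\nu\in\mathbb C[z]$, whose product is determined by the commutation relation $ab-ba=b^2$ and by the continuity of left and right multiplication by $a$ for the $b$-adic topology; it contains $\mathbb C[[b]]$. An (a,b)-module is a left $\tilde{\mathcal A}$-module which is free of finite rank over $\mathbb C[[b]]$; its rank is its $\mathbb C[[b]]$-rank. A module is monogenic if it is generated as a left $\tilde{\mathcal A}$-module by one element. A sub-(a,b)-module $F\subset E$ is normal if $F\cap bE=bF$ (equivalently $E/F$ is again an (a,b)-module). For a rational $\lambda\in\,]0,1]$ let $\Xi_\lambda=\bigoplus_{j\ge0}\mathbb C[[b]]e_{\lambda,j}$ (finite sums; think of $e_{\lambda,j}=s^{\lambda-1}(\log s)^j/j!$, with $a$ = multiplication by $s$ and $b$ = primitive vanishing at $0$), where $a$ is defined by $ae_{\lambda,0}=\lambda be_{\lambda,0}$, $ae_{\lambda,j}=\lambda be_{\lambda,j}+be_{\lambda,j-1}$ for $j\ge1$, extended via $aS(b)=S(b)a+b^2S'(b)$ for $S\in\mathbb C[[b]]$. Put $\Xi=\bigoplus_{\lambda\in\mathbb Q\cap]0,1]}\Xi_\lambda$, a left $\tilde{\mathcal A}$-module. A theme is a left $\tilde{\mathcal A}$-module isomorphic to $\tilde{\mathcal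 A}\varphi\subset\Xi$ for some $\varphi\in\Xi$. *)

(* Defs.v *)
From HB Require Import structures.
From mathcomp Require Import all_boot all_order all_algebra.
From mathcomp Require Import complex.
From mathcomp Require Import Rstruct.
From Stdlib Require Import Reals.
Set Implicit Arguments. Unset Strict Implicit. Unset Printing Implicit Defensive.
Import Order.TTheory GRing.Theory Num.Theory.
Local Open Scope ring_scope.

Definition CC : Type := (Rdefinitions.R)[i].

(* An element is recorded by its coefficients:
   x lam j n = coefficient of b^n in the C[[b]]-coordinate of x on
   e_{lam,j}.  Membership in Xi (= finite sums, lam in Q cap ]0,1]) is
   the predicate [inXi]. *)
Definition Xi : Type := rat -> nat -> nat -> CC.

Definition Xi0 : Xi := fun _ _ _ => 0.
Definition Xiadd (x y : Xi) : Xi := fun l j n => x l j n + y l j n.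
Definition Xiscale (c : CC) (x : Xi) : Xi := fun l j n => c * x l j n.

Definition inXi (x : Xi) : Prop :=
  (forall (l : rat) (j n : nat), ~ (0 < l /\ l <= 1) -> x l j n = 0) /\
  exists s : seq (rat * nat),
    forall (l : rat) (j n : nat), (l, j) \notin s -> x l j n = 0.

(* b : multiplication of the C[[b]]-coordinates by b. *)
Definition opb (x : Xi) : Xi :=
  fun l j n => if n is m.+1 then x l j m else 0.

(* a : a(S e_{l,j}) = S (l b e_{l,j} + b e_{l,j-1}) + b^2 S' e_{l,j}
   (with e_{l,-1} = 0), so the coordinate on e_{l,j} of a x is
   l b x_{l,j} + b^2 x_{l,j}' + b x_{l,j+1}. *)
Definition opa (x : Xi) : Xi :=
  fun l j n => if n is m.+1
               then (ratr l + m%:R) * x l j m + x l j.+1 m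
               else 0.

Definition polyA (p : {poly CC}) (x : Xi) : Xi :=
  fun l j n => \sum_(k < size p) p`_k * iter k opa x l j n.

(* The algebra A~ : formal series sum_nu P_nu(a) b^nu, P_nu in C[z]. *)
Definition Atilde : Type := nat -> {poly CC}.

(* Action of u = sum_nu P_nu(a) b^nu on Xi.  Both a and b raise the
   b-adic order by 1, so only nu <= n contributes to the coefficient
   of b^n: this is the b-adic limit of the partial sums. *)
Definition actA (u : Atilde) (x : Xi) : Xi :=
  fun l j n => \sum_(nu < n.+1) polyA (u nu) (iter nu opb x) l j n.

Definition subXi := Xi -> Prop.

Definition genA (phi : Xi) : subXi := fun x => exists u : Atilde, x = actA u phi.

Definition sub_incl (F E : subXi) : Prop := forall x, F x -> E x.

Definition is_submoduleA (F : subXi) : Prop :=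
  F Xi0 /\ (forall x y, F x -> F y -> F (Xiadd x y)) /\
  (forall u x, F x -> F (actA u x)).

Definition monogenic (F : subXi) : Prop :=
  exists psi, F psi /\ forall x, F x <-> genA psi x.

Definition Alinear_on (S : subXi) (f : Xi -> Xi) : Prop :=
  (forall x y, S x -> S y -> f (Xiadd x y) = Xiadd (f x) (f y)) /\
  (forall u x, S x -> f (actA u x) = actA u (f x)).

Definition Aiso (S T : subXi) (f : Xi -> Xi) : Prop :=
  (forall x, S x -> T (f x)) /\
  (forall y, T y -> exists x, S x /\ f x = y) /\
  (forall x y, S x -> S y -> f x = f y -> x = y) /\
  Alinear_on S f.

Definition is_theme (S : subXi) : Prop :=
  exists phi, inXi phi /\ exists f, Aiso S (genA phi) f.

Definition normal_in (F E : subXi) : Prop :=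
  forall x, (F x /\ exists y, E y /\ x = opb y) <-> exists y, F y /\ x = opb y.

(* E/F is a theme: there is theta in Xi and a surjective A~-linear map
   E -> A~ theta with kernel F (i.e. E/F is isomorphic to A~ theta). *)
Definition quotient_is_theme (E F : subXi) : Prop :=
  exists theta, inXi theta /\ exists pi : Xi -> Xi,
    (forall x, E x -> genA theta (pi x)) /\
    (forall y, genA theta y -> exists x, E x /\ pi x = y) /\
    (forall x, E x -> (pi x = Xi0 <-> F x)) /\
    Alinear_on E pi.

(* Main.v *)
Require Import Defs.
From mathcomp Require Import all_boot all_algebra.
From mathcomp Require Import all_order complex Rstruct.
From mathcomp Require Import ring lra zify.
From Stdlib Require Import FunctionalExtensionality Classical IndefiniteDescription.
Set Implicit Arguments. Unset Strict Implicit. Unset Printing Implicit Defensive.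
Import Order.TTheory GRing.Theory Num.Theory.
Local Open Scope ring_scope.


Lemma XiE (x y : Xi) : (forall l j n, x l j n = y l j n) -> x = y.
Proof.
move=> H; apply: functional_extensionality => l.
apply: functional_extensionality => j; apply: functional_extensionality => n.
exact: H.
Qed.

Lemma iter_opb k x l j n :
  iter k opb x l j n = if (k <= n)%N then x l j (n - k)%N else 0.
Proof.
elim: k n => [|k IH] n /=; first by rewrite subn0.
case: n => [|m] //=; by rewrite /opb IH ltnS.
Qed.

Lemma iter_opa_low k z l j n : (n < k)%N -> iter k opa z l j n = 0.
Proof.
move: n j; elim: k => [|k IH] n j H //.
case: n H => [|m] H; first by rewrite iterS.
by rewrite iterS /opa !IH // mulr0 add0r.
Qed.

Lemma polyA_n p z l j n :
  polyA p z l j n = \sum_(k < n.+1) p`_k * iter k opa z l j n.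
Proof.
rewrite /polyA.
rewrite (big_ord_widen (maxn (size p) n.+1) (fun k => p`_k * iter k opa z l j n)) ?leq_maxl //.
rewrite [RHS](big_ord_widen (maxn (size p) n.+1) (fun k => p`_k * iter k opa z l j n)) ?leq_maxr //.
rewrite big_mkcond [RHS]big_mkcond /=; apply: eq_bigr => i _.
case: ifP; case: ifP => // H1 H2.
- by rewrite iter_opa_low ?mulr0 // ltnNge -ltnS H1.
- by rewrite nth_default ?mul0r // leqNgt H2.
Qed.

Lemma polyAC c z l j n : polyA c%:P z l j n = c * z l j n.
Proof.
rewrite /polyA size_polyC; case: eqP => [->|_].
  by rewrite big_ord0 mul0r.
by rewrite big_ord1 coefC /=.
Qed.

Lemma polyA0 z l j n : polyA 0 z l j n = 0.
Proof. by rewrite /polyA size_poly0 big_ord0. Qed.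

Lemma polyAX z l j n : polyA 'X z l j n = opa z l j n.
Proof.
rewrite /polyA size_polyX !big_ord_recl big_ord0 /= !coefX /=.
by rewrite mul0r mul1r add0r addr0.
Qed.

Definition uS (S : nat -> CC) : Atilde := fun nu => (S nu)%:P.
Definition uA : Atilde := fun nu => if nu is 0 then 'X else 0.

Lemma actA_uS S x l j n :
  actA (uS S) x l j n = \sum_(nu < n.+1) S nu * x l j (n - nu)%N.
Proof.
rewrite /actA; apply: eq_bigr => nu _.
by rewrite /uS polyAC iter_opb -ltnS ltn_ord.
Qed.

Lemma actA_uA x : actA uA x = opa x.
Proof.
apply: XiE => l j n; rewrite /actA big_ord_recl /= polyAX big1 ?addr0 //.
by move=> i _; rewrite polyA0.
Qed.

Definition supp (P : rat -> nat -> Prop) (x : Xi) :=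
  forall l j n, ~ P l j -> x l j n = 0.
Definition dclosed (P : rat -> nat -> Prop) := forall l j, P l j.+1 -> P l j.

Section Supp.
Variables (P : rat -> nat -> Prop) (hP : dclosed P).

Lemma supp_opa x : supp P x -> supp P (opa x).
Proof.
move=> sx l j [|m] nP //=.
by rewrite /opa !sx ?mulr0 ?add0r // => /hP.
Qed.

Lemma supp_opb x : supp P x -> supp P (opb x).
Proof. by move=> sx l j [|m] nP //=; rewrite /opb sx. Qed.

Lemma supp_iter_opa k x : supp P x -> supp P (iter k opa x).
Proof. by move=> sx; elim: k => //= k IH; apply: supp_opa. Qed.

Lemma supp_iter_opb k x : supp P x -> supp P (iter k opb x).
Proof. by move=> sx; elim: k => //= k IH; apply: supp_opb. Qed.

Lemma supp_polyA p x : supp P x -> supp P (polyA p x).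
Proof.
move=> sx l j n nP; rewrite /polyA big1 // => k _.
by rewrite (supp_iter_opa k sx) // mulr0.
Qed.

Lemma supp_actA u x : supp P x -> supp P (actA u x).
Proof.
move=> sx l j n nP; rewrite /actA big1 // => nu _.
by rewrite (supp_polyA (u nu) (supp_iter_opb nu sx)).
Qed.
End Supp.

Definition Pd (s : seq (rat * nat)) (l : rat) (j : nat) : Prop :=
  (0 < l <= 1) /\ exists j', (j <= j')%N /\ (l, j') \in s.

Lemma dclosed_Pd s : dclosed (Pd s).
Proof.
move=> l j [H [j' [le Hs]]]; split => //; exists j'; split => //.
exact: ltnW.
Qed.

Lemma inXi_supp x : inXi x -> exists s, supp (Pd s) x.
Proof.
move=> [H1 [s H2]]; exists s => l j n nP.
case: (boolP (0 < l <= 1)) => Hl; last first.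
  by apply: H1 => -[a b]; move/negP: Hl; apply; rewrite a b.
apply: H2; apply/negP => Hin; apply: nP; split => //; exists j; split => //.
Qed.

Lemma supp_inXi s x : supp (Pd s) x -> inXi x.
Proof.
move=> sx; split.
  move=> l j n Hl; apply: sx => -[/andP [a b] _]; exact: Hl (conj a b).
exists (flatten [seq [seq (p.1, i) | i <- iota 0 p.2.+1] | p <- s]) => l j n Hn.
apply: sx.
move=> [_ [j' [le Hs]]]; move/negP: Hn; apply.
apply/flatten_mapP; exists (l, j') => //.
apply/mapP; exists j => //; rewrite mem_iota /= add0n ltnS //.
Qed.

Definition Tk (k : rat -> nat) (x : Xi) : Xi := fun l j n => x l (j + k l)%N n.

Lemma T_opa k x : Tk k (opa x) = opa (Tk k x).
Proof. by apply: XiE => l j [|m] //=; rewrite /Tk /opa addSn. Qed.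

Lemma T_opb k x : Tk k (opb x) = opb (Tk k x).
Proof. by apply: XiE => l j [|m]. Qed.

Lemma T_iter_opa k i x : Tk k (iter i opa x) = iter i opa (Tk k x).
Proof. by elim: i => //= i IH; rewrite T_opa IH. Qed.

Lemma T_iter_opb k i x : Tk k (iter i opb x) = iter i opb (Tk k x).
Proof. by elim: i => //= i IH; rewrite T_opb IH. Qed.

Lemma T_polyA k p x : Tk k (polyA p x) = polyA p (Tk k x).
Proof.
apply: XiE => l j n; rewrite /Tk /polyA; apply: eq_bigr => i _.
by rewrite -T_iter_opa.
Qed.

Lemma T_actA k u x : Tk k (actA u x) = actA u (Tk k x).
Proof.
apply: XiE => l j n; rewrite /Tk /actA; apply: eq_bigr => i _.
by rewrite -T_iter_opb -T_polyA.
Qed.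

Lemma T_add k x y : Tk k (Xiadd x y) = Xiadd (Tk k x) (Tk k y).
Proof. by []. Qed.

Lemma opa_add x y : opa (Xiadd x y) = Xiadd (opa x) (opa y).
Proof.
apply: XiE => l j [|m] /=; rewrite /opa /Xiadd ?addr0 //.
by rewrite mulrDr -!addrA; congr (_ + _); rewrite addrCA.
Qed.

Lemma opa_scale c x : opa (Xiscale c x) = Xiscale c (opa x).
Proof.
apply: XiE => l j [|m] /=; rewrite /opa /Xiscale ?mulr0 //.
by rewrite mulrDr mulrCA.
Qed.

Lemma opb_add x y : opb (Xiadd x y) = Xiadd (opb x) (opb y).
Proof. by apply: XiE => l j [|m] /=; rewrite /opb /Xiadd ?addr0. Qed.

Lemma opb_scale c x : opb (Xiscale c x) = Xiscale c (opb x).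
Proof. by apply: XiE => l j [|m] /=; rewrite /opb /Xiscale ?mulr0. Qed.

Lemma iter_opa_add k x y : iter k opa (Xiadd x y) = Xiadd (iter k opa x) (iter k opa y).
Proof. by elim: k => //= k ->; rewrite opa_add. Qed.
Lemma iter_opa_scale k c x : iter k opa (Xiscale c x) = Xiscale c (iter k opa x).
Proof. by elim: k => //= k ->; rewrite opa_scale. Qed.
Lemma iter_opb_add k x y : iter k opb (Xiadd x y) = Xiadd (iter k opb x) (iter k opb y).
Proof. by elim: k => //= k ->; rewrite opb_add. Qed.
Lemma iter_opb_scale k c x : iter k opb (Xiscale c x) = Xiscale c (iter k opb x).
Proof. by elim: k => //= k ->; rewrite opb_scale. Qed.

Lemma polyA_addz p x y l j n :
  polyA p (Xiadd x y) l j n = polyA p x l j n + polyA p y l j n.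
Proof.
rewrite /polyA -big_split /=; apply: eq_bigr => i _.
by rewrite iter_opa_add /Xiadd mulrDr.
Qed.

Lemma polyA_scalez p c x l j n :
  polyA p (Xiscale c x) l j n = c * polyA p x l j n.
Proof.
rewrite /polyA mulr_sumr; apply: eq_bigr => i _.
by rewrite iter_opa_scale /Xiscale mulrCA.
Qed.

Lemma polyA_addp p q z l j n :
  polyA (p + q) z l j n = polyA p z l j n + polyA q z l j n.
Proof.
rewrite !polyA_n -big_split /=; apply: eq_bigr => i _.
by rewrite coefD mulrDl.
Qed.

Lemma polyA_oppp p z l j n : polyA (- p) z l j n = - polyA p z l j n.
Proof.
rewrite !polyA_n -sumrN; apply: eq_bigr => i _.
by rewrite coefN mulNr.
Qed.

Lemma polyA_mulnp p k z l j n : polyA (p *+ k) z l j n = k%:R * polyA p z l j n.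
Proof.
rewrite !polyA_n mulr_sumr; apply: eq_bigr => i _.
by rewrite coefMn !mulrnAl mul1r.
Qed.

Lemma polyA_signp p i z l j n :
  polyA ((-1) ^+ i *: p) z l j n = (-1) ^+ i * polyA p z l j n.
Proof.
rewrite !polyA_n mulr_sumr; apply: eq_bigr => k _.
by rewrite coefZ mulrA.
Qed.

Lemma polyA_sump K (P : nat -> {poly CC}) z l j n :
  polyA (\sum_(i < K) P i) z l j n = \sum_(i < K) polyA (P i) z l j n.
Proof.
elim: K => [|K IH]; first by rewrite !big_ord0 polyA0.
by rewrite !big_ord_recr /= polyA_addp IH.
Qed.

Lemma polyA_mulX p z l j n : polyA (p * 'X) z l j n = polyA p (opa z) l j n.
Proof.
rewrite !polyA_n big_ord_recl coefMX /= mul0r add0r.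
rewrite [RHS]big_ord_recr /= -iterSr (@iter_opa_low n.+1) // mulr0 addr0.
apply: eq_bigr => i _; rewrite coefMX /= add0n -iterS iterSr //.
Qed.

Definition low (m : nat) (w : Xi) := forall l j n, (n < m)%N -> w l j n = 0.

Lemma low_opa m w : low m w -> low m.+1 (opa w).
Proof. by move=> H l j [|n] //= Hn; rewrite /opa !H // mulr0 add0r. Qed.

Lemma low_iter_opa k m w : low m w -> low (m + k) (iter k opa w).
Proof.
move=> H; elim: k => [|k IH]; first by rewrite addn0.
by rewrite addnS /=; apply: low_opa.
Qed.

Lemma low_polyA p m w : low m w -> low m (polyA p w).
Proof.
move=> H l j n Hn; rewrite /polyA big1 // => k _.
by rewrite (@low_iter_opa k m w H) ?mulr0 // ltn_addr.
Qed.

Lemma low_iter_opb k w : low k (iter k opb w).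
Proof. by move=> l j n Hn; rewrite iter_opb leqNgt Hn. Qed.

Lemma opb_opa x : opb (opa x) = Xiadd (opa (opb x)) (Xiscale (-1) (opb (opb x))).
Proof.
apply: XiE => l j [|[|m]] /=; rewrite /opb /opa /Xiadd /Xiscale /=.
- by rewrite mulr0 add0r.
- by rewrite !mulr0 !addr0.
rewrite -[m.+1]addn1 natrD; ring.
Qed.

Lemma bm_opa m z :
  iter m opb (opa z) = Xiadd (opa (iter m opb z)) (Xiscale (- m%:R) (iter m.+1 opb z)).
Proof.
elim: m => [|m IH].
  by apply: XiE => l j n; rewrite /Xiadd /Xiscale /= oppr0 mul0r addr0.
rewrite iterS IH opb_add opb_scale opb_opa -!iterS.
apply: XiE => l j n; rewrite /Xiadd /Xiscale /= -natr1; ring.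
Qed.

Lemma opb_polyA_step p c z :
  opb (polyA (p * 'X + c%:P) z) = Xiadd (opb (polyA p (opa z))) (Xiscale c (opb z)).
Proof.
apply: XiE => l j [|n] //=; rewrite /opb /Xiadd /Xiscale ?mulr0 ?addr0 //.
by rewrite polyA_addp polyA_mulX polyAC.
Qed.

Lemma key p : forall z l j n N, (n <= N)%N ->
  opb (polyA p z) l j n =
  \sum_(i < N) (-1) ^+ i * polyA (p^`(i)) (iter i.+1 opb z) l j n.
Proof.
elim/poly_ind: p => [|p c IH] z l j n N hn.
  rewrite big1 => [|i _]; last by rewrite derivn_poly0 ?size_poly0 // polyA0 mulr0.
  by case: n hn => [|n] _ //=; rewrite /opb polyA0.
case: N hn => [|N] hn.
  by move: hn; rewrite leqn0 => /eqP ->; rewrite big_ord0.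
rewrite opb_polyA_step /Xiadd /Xiscale (IH (opa z) l j n N.+1 hn).
under eq_bigr => i _ do rewrite bm_opa polyA_addz polyA_scalez -polyA_mulX mulrDr.
rewrite big_split /=.
have L2 : forall i, (n < i.+2)%N ->
    polyA p^`(i) (opb (opb (iter i opb z))) l j n = 0.
  by move=> i h; exact: (@low_polyA _ i.+2 (iter i.+2 opb z) (@low_iter_opb _ _) l j n h).
rewrite [X in X + _ + _]big_ord_recl [X in _ + X + _]big_ord_recr /=.
rewrite L2 ?ltnS // mulr0 mulr0 addr0.
rewrite [RHS]big_ord_recl /= ?derivn0 polyA_addp polyAC expr0 !mul1r.
rewrite -!addrA; congr (_ + _); rewrite addrA addrC; congr (_ + _).
rewrite -big_split; apply: eq_bigr => i _ /=.
rewrite add0n -!derivnS derivnMXaddC polyA_addp polyA_mulnp /bump /= add1n exprS.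
ring.
Qed.

Lemma tri_exchange K (G : nat -> nat -> CC) :
  \sum_(mu < K.+1) \sum_(nu < mu) G nu (mu.-1 - nu)%N =
  \sum_(nu < K) \sum_(i < K - nu) G nu i.
Proof.
elim: K => [|K IH]; first by rewrite big_ord1 big_ord0 big_ord0.
rewrite big_ord_recr /= IH [RHS]big_ord_recr /= subSnn big_ord1.
have -> : \sum_(i < K) \sum_(i0 < K.+1 - i) G i i0 =
   \sum_(i < K) (\sum_(i0 < K - i) G i i0 + G i (K - i)%N).
  by apply: eq_bigr => i _; rewrite subSn ?big_ord_recr // ltnW.
rewrite big_split /= -addrA; congr (_ + _).
by rewrite big_ord_recr /= subnn.
Qed.

Lemma tri_exchange0 K (G : nat -> nat -> CC) :
  (forall nu i, (K <= nu + i)%N -> G nu i = 0) ->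
  \sum_(nu < K) \sum_(i < K) G nu i =
  \sum_(mu < K.+1) \sum_(nu < mu) G nu (mu.-1 - nu)%N.
Proof.
move=> HG; rewrite tri_exchange; apply: eq_bigr => nu _.
rewrite (@big_ord_widen _ _ _ (K - nu) K (G nu)) ?leq_subr //.
rewrite big_mkcond [RHS]big_mkcond.
apply: eq_bigr => i _; case: ifP => // H; rewrite HG //.
by rewrite -leq_subLR leqNgt H.
Qed.

Lemma genA_opb phi x : genA phi x -> genA phi (opb x).
Proof.
move=> [u ->].
exists (fun mu => \sum_(nu < mu) (-1) ^+ (mu.-1 - nu)%N *: (u nu)^`(mu.-1 - nu)).
apply: XiE => l j [|m].
  by rewrite /actA big_ord1 /= big_ord0 polyA0.
rewrite /actA /=.
under eq_bigr => nu _ do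
  rewrite -[polyA _ _ _ _ _]/(opb (polyA (u nu) (iter nu opb phi)) l j m.+1)
          (@key _ _ l j m.+1 m.+1 (leqnn _)).
rewrite (tri_exchange0 (G := fun nu i => (-1) ^+ i *
     polyA (u nu)^`(i) (iter i.+1 opb (iter nu opb phi)) l j m.+1)).
  apply: eq_bigr => mu _; rewrite (@polyA_sump mu (fun nu => (-1) ^+ (mu.-1 - nu)%N *: (u nu)^`(mu.-1 - nu))); apply: eq_bigr => nu _.
  rewrite polyA_signp; congr (_ * polyA _ _ _ _ _).
  rewrite -iterD; apply: (congr1 (fun k => iter k opb phi)).
  by case: mu nu => [[|mu] //= Hmu] [nu /= Hnu]; rewrite addSn subnK // -ltnS.
move=> nu i Hi; rewrite -iterD (@low_polyA _ (i.+1 + nu) _ (@low_iter_opb _ _)) ?mulr0 //.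
by rewrite addSn ltnS addnC.
Qed.

Lemma nat_aux1 v n i : (v <= n -> i < n.+1 -> v <= n - i -> i < (n - v).+1)%N.
Proof. lia. Qed.
Lemma nat_aux2 v n i : (v <= n -> i < n.+1 -> (v <= n - i) = false -> (i < (n - v).+1) = false)%N.
Proof. move=> *; apply/negbTE; apply/negP; lia. Qed.

Lemma nat_aux3 o (i : 'I_o) : (o - i.+1 < o)%N.
Proof. have := ltn_ord i; lia. Qed.

Definition conv (S t : nat -> CC) (n : nat) := \sum_(nu < n.+1) S nu * t (n - nu)%N.

Lemma conv_shift S t U v n :
  (forall k, t k = if (v <= k)%N then U (k - v)%N else 0) ->
  conv S t n = if (v <= n)%N then conv S U (n - v)%N else 0.
Proof.
move=> Ht; rewrite /conv; case: leqP => Hv.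
  rewrite (@big_ord_widen _ _ _ (n - v).+1 n.+1 (fun nu => S nu * U (n - v - nu)%N)); last first.
    by rewrite ltnS leq_subr.
  rewrite [RHS]big_mkcond; apply: eq_bigr => i _; rewrite Ht.
  have Hin := ltn_ord i.
  case: ifP => Hi.
    by rewrite (nat_aux1 Hv Hin Hi) /= subnAC.
  by rewrite ifF ?mulr0 // (nat_aux2 Hv Hin Hi).
rewrite big1 // => i _; rewrite Ht ifF ?mulr0 //; apply/negbTE; rewrite -ltnNge.
exact: leq_ltn_trans (leq_subr _ _) Hv.
Qed.

Lemma conv_low S t o n : (forall k, (k < o)%N -> t k = 0) -> (n < o)%N -> conv S t n = 0.
Proof.
move=> Ht Hn; rewrite /conv big1 // => i _; rewrite Ht ?mulr0 //.
exact: leq_ltn_trans (leq_subr _ _) Hn.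
Qed.

Lemma conv_at S t o : (forall k, (k < o)%N -> t k = 0) -> conv S t o = S 0%N * t o.
Proof.
move=> Ht; rewrite /conv big_ord_recl /= subn0 big1 ?addr0 // => i _.
by rewrite Ht ?mulr0 // /bump /= add1n nat_aux3.
Qed.

Lemma conv_delta0 S n : conv S (fun k => (k == 0)%N%:R) n = S n.
Proof.
rewrite /conv big_ord_recr /= subnn eqxx mulr1 big1 ?add0r // => i _.
by rewrite subn_eq0 leqNgt ltn_ord mulr0.
Qed.

Lemma series_order (t : nat -> CC) : (exists n, t n <> 0) ->
  exists v, t v <> 0 /\ forall n, (n < v)%N -> t n = 0.
Proof.
move=> H.
have H' : exists n, t n != 0 by case: H => n Hn; exists n; apply/eqP.
case: (ex_minnP H') => v /eqP Hv Hmin; exists v; split => // n Hn.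
by apply/eqP; apply: contraTT Hn => /Hmin; rewrite -leqNgt.
Qed.

Fixpoint wseq (U : nat -> CC) (n : nat) : seq CC :=
  if n is n'.+1 then
    let s := wseq U n' in
    rcons s (- (U 0%N)^-1 * \sum_(t < n'.+1) nth 0 s t * U (n'.+1 - t)%N)
  else [:: (U 0%N)^-1].

Lemma size_wseq U n : size (wseq U n) = n.+1.
Proof. by elim: n => //= n IH; rewrite size_rcons IH. Qed.

Lemma nth_wseq U n m t : (t <= n)%N -> (n <= m)%N -> nth 0 (wseq U m) t = nth 0 (wseq U n) t.
Proof.
move=> Htn; elim: m => [|m IH] Hnm.
  by move: Hnm; rewrite leqn0 => /eqP ->.
case: (leqP n m) => Hn.
  by rewrite /= nth_rcons size_wseq ifT ?IH // ltnS (leq_trans Htn).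
have -> : n = m.+1 by apply/eqP; rewrite eqn_leq Hnm.
by [].
Qed.

Lemma series_inv (U : nat -> CC) : U 0%N != 0 ->
  exists W : nat -> CC, W 0%N != 0 /\ forall n, conv W U n = (n == 0)%N%:R.
Proof.
move=> HU; exists (fun n => nth 0 (wseq U n) n); split.
  by rewrite /= invr_eq0.
case => [|n].
  by rewrite /conv big_ord1 /= subn0 mulVf.
rewrite /conv big_ord_recr /= subnn nth_rcons size_wseq ltnn eqxx /=.
under [X in _ + _ * X * _]eq_bigr => i _ do rewrite (@nth_wseq U i n i (leqnn _) (ltn_ord i)).
by rewrite mulrAC mulNr mulVf // mulN1r subrr.
Qed.


Lemma ratr_ne0 (l l0 : rat) (o v : nat) :
  0 < l <= 1 -> 0 < l0 <= 1 -> l != l0 ->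
  (ratr l + o%:R - (ratr l0 + v%:R) : CC) != 0.
Proof.
move=> /andP [h1 h2] /andP [h3 h4] hne.
have -> : (ratr l + o%:R - (ratr l0 + v%:R) : CC) = ratr (l + o%:R - (l0 + v%:R)).
  by rewrite rmorphB rmorphD rmorphD !rmorph_nat.
rewrite fmorph_eq0.
case: (ltngtP o v) => H.
- have : (o%:R + 1 <= v%:R :> rat) by rewrite natr1 ler_nat.
  move=> H'; apply/negP => /eqP E; lra.
- have : (v%:R + 1 <= o%:R :> rat) by rewrite natr1 ler_nat.
  move=> H'; apply/negP => /eqP E; lra.
- subst o; apply/negP => /eqP E; move/negP: hne; apply; apply/eqP; lra.
Qed.

Section Closure.
Variable F : subXi.
Hypothesis hF : is_submoduleA F.

Lemma F0 : F Xi0. Proof. by case: hF. Qed.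
Lemma Fadd x y : F x -> F y -> F (Xiadd x y). Proof. by case: hF => _ [H _]; apply: H. Qed.
Lemma Fact u x : F x -> F (actA u x). Proof. by case: hF => _ [_ H]; apply: H. Qed.

Lemma Fconv S x : F x -> F (fun l j n => conv S (x l j) n).
Proof.
move=> Fx; have -> : (fun l j n => conv S (x l j) n) = actA (uS S) x.
  by apply: XiE => l j n; rewrite actA_uS.
exact: Fact.
Qed.

Lemma Fopa x : F x -> F (opa x).
Proof. by move=> Fx; rewrite -actA_uA; apply: Fact. Qed.

Lemma Fscale c x : F x -> F (Xiscale c x).
Proof.
move=> Fx; have -> : Xiscale c x = (fun l j n => conv (fun k => if k is 0 then c else 0) (x l j) n).
  apply: XiE => l j n; rewrite /conv big_ord_recl /= subn0 big1 ?addr0 // => i _.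
  by rewrite mul0r.
exact: Fconv.
Qed.

Lemma Fopb x : F x -> F (opb x).
Proof.
move=> Fx; have -> : opb x = (fun l j n => conv (fun k => if k is 1 then 1 else 0) (x l j) n).
  apply: XiE => l j [|n]; rewrite /conv.
    by rewrite big_ord1 /= mul0r.
  rewrite big_ord_recl big_ord_recl /= big1 ?mul0r ?add0r ?addr0 ?mul1r ?subn1 //.
  by move=> i _; rewrite mul0r.
exact: Fconv.
Qed.
End Closure.


Definition profile (y : Xi) (h : rat -> nat) :=
  (forall l j n, (h l <= j)%N -> y l j n = 0) /\
  (forall l, (0 < h l)%N -> exists n, y l (h l).-1 n <> 0).

Lemma profile_ext y h h2 : profile y h -> (forall l, h l = h2 l) -> profile y h2.
Proof.
move=> [P1 P2] E; split.
  by move=> l j n; rewrite -E; apply: P1.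
by move=> l; rewrite -E; apply: P2.
Qed.

Section Lat.
Variable F : subXi.
Hypothesis hF : is_submoduleA F.
Hypothesis hL : forall y, F y -> forall l j n, y l j n <> 0 -> 0 < l <= 1.

Lemma decr y h l0 : F y -> profile y h -> (0 < h l0)%N ->
  exists y', F y' /\ profile y' (fun l => if l == l0 then (h l0).-1 else h l).
Proof.
move=> Fy [P1 P2] hl0.
set k0 := (h l0).-1.
have [v [tv tlow]] := series_order (P2 l0 hl0).
pose U := fun m => y l0 k0 (m + v)%N.
have U0 : U 0%N != 0 by rewrite /U add0n; apply/eqP.
have [W [W0 HW]] := series_inv U0.
pose y1 : Xi := fun l j n => conv W (y l j) n.
have Fy1 : F y1 by apply: Fconv.
have y1top : forall n, y1 l0 k0 n = (n == v)%N%:R.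
  move=> n; rewrite /y1 (@conv_shift W (y l0 k0) U v n).
    case: leqP => H; first by rewrite HW subn_eq0 eqn_leq H andbT.
    by rewrite ltn_eqF.
  move=> k; case: leqP => H; first by rewrite /U subnK.
  exact: tlow.
have y1zero : forall l j n, (h l <= j)%N -> y1 l j n = 0.
  by move=> l j n H; rewrite /y1 /conv big1 // => i _; rewrite P1 // mulr0.
pose c := - (ratr l0 + v%:R : CC).
pose y2 := Xiadd (opa y1) (Xiscale c (opb y1)).
have Fy2 : F y2 by apply: Fadd => //; [apply: Fopa | apply: Fscale => //; apply: Fopb].
have y2S : forall l j n, y2 l j n.+1 =
    (ratr l + n%:R - (ratr l0 + v%:R)) * y1 l j n + y1 l j.+1 n.
  by move=> l j n; rewrite /y2 /Xiadd /Xiscale /= /c; ring.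
have y20 : forall l j, y2 l j 0%N = 0.
  by move=> l j; rewrite /y2 /Xiadd /Xiscale /= mulr0 addr0.
have hk0 : k0.+1 = h l0 by rewrite /k0 prednK.
exists y2; split => //; split.
- move=> l j [|n] H; first exact: y20.
  rewrite y2S.
  case: (eqVneq l l0) H => [-> | ne] H.
    rewrite (y1zero l0 j.+1); last by rewrite -hk0 ltnS.
    case: (eqVneq j k0) => [-> | nej].
      rewrite y1top; case: (eqVneq n v) => [-> | nev].
        by rewrite subrr mul0r addr0.
      by rewrite mulr0 addr0.
    rewrite y1zero ?mulr0 ?addr0 // -hk0.
    by rewrite ltn_neqAle eq_sym nej H.
  by rewrite !y1zero ?mulr0 ?addr0 // ltnW.
- move=> l.
  case: (eqVneq l l0) => [-> | ne]; rewrite ?eqxx ?(negbTE ne) => H.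
    exists v.+1; rewrite y2S subrr mul0r add0r prednK //.
    by rewrite y1top eqxx; apply/eqP; rewrite oner_eq0.
  have [o [so slow]] := series_order (P2 l H).
  exists o.+1; rewrite y2S (y1zero l (h l).-1.+1); last by rewrite prednK.
  rewrite addr0 /y1 (conv_at W slow); apply/eqP; rewrite mulf_neq0 //.
    apply: ratr_ne0 => //; first exact: (hL Fy so).
    exact: (hL Fy tv).
  by rewrite mulf_neq0 //; apply/eqP.
Qed.

Lemma decr_many y h l0 d : F y -> profile y h -> (d <= h l0)%N ->
  exists y', F y' /\ profile y' (fun l => if l == l0 then (h l0 - d)%N else h l).
Proof.
move=> Fy Py; elim: d => [|d IH] Hd.
  exists y; split => //; apply: (profile_ext Py) => l.
  by case: eqP => // ->; rewrite subn0.
have [y1 [Fy1 Py1]] := IH (ltnW Hd).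
have := @decr y1 _ l0 Fy1 Py1; rewrite eqxx subn_gt0 => /(_ Hd) [y2 [Fy2 Py2]].
exists y2; split => //; apply: (profile_ext Py2) => l.
by case: eqP => // _; rewrite subnS.
Qed.

Lemma reach y h (h' : rat -> nat) (s : seq rat) : F y -> profile y h ->
  (forall l, (h' l <= h l)%N) ->
  exists y', F y' /\ profile y' (fun l => if l \in s then h' l else h l).
Proof.
move=> Fy Py Hle; elim: s => [|l0 s [y1 [Fy1 Py1]]].
  by exists y; split => //; apply: (profile_ext Py) => l; rewrite in_nil.
set h1 := (fun l => if l \in s then h' l else h l) in Py1.
have Hd : (h1 l0 - h' l0 <= h1 l0)%N by rewrite leq_subr.
have [y2 [Fy2 Py2]] := decr_many Fy1 Py1 Hd.
exists y2; split => //; apply: (profile_ext Py2) => l.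
rewrite in_cons /h1; case: (eqVneq l l0) => [-> | ne] /=.
  by case: ifP => _; [rewrite subnn subn0 | rewrite subKn].
by [].
Qed.
End Lat.


Lemma min_ex (P : nat -> Prop) : (exists n, P n) ->
  exists n, P n /\ forall m, P m -> (n <= m)%N.
Proof.
move=> [n0 Pn0]; apply: NNPP => H.
have K : forall n m, (m <= n)%N -> ~ P m.
  elim => [|n IH] m Hm Pm.
    move: Hm; rewrite leqn0 => /eqP Em; subst m.
    by apply: H; exists 0%N; split.
  case: (leqP m n) => Hmn; first exact: IH Hmn Pm.
  apply: H; exists m; split => // m' Pm'.
  case: (leqP m m') => // Hm'; exfalso; apply: (IH m') => //.
  by rewrite -ltnS (leq_trans Hm') //.
exact: (K n0 n0 (leqnn _) Pn0).
Qed.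

Lemma exists_profile x s : supp (Pd s) x ->
  exists k, profile x k /\ forall l, l \notin map fst s -> k l = 0%N.
Proof.
move=> sx.
pose B (l : rat) (h : nat) := forall j n, (h <= j)%N -> x l j n = 0.
have HB : forall l, exists h, B l h /\ (forall m, B l m -> (h <= m)%N)
    /\ (l \notin map fst s -> h = 0%N).
  move=> l.
  have Hex : exists h, B l h.
    exists (\sum_(p <- s) p.2.+1)%N => j n Hj; apply: sx => -[_ [j' [le Hs]]].
    have : (j'.+1 <= \sum_(p <- s) p.2.+1)%N.
      by rewrite (big_rem _ Hs) /= leq_addr.
    move=> H'; have := leq_trans (leq_ltn_trans le (leq_ltn_trans (leqnn _) H')) Hj.
    by rewrite ltnn.
  have [h [Bh Hmin]] := min_ex Hex.
  exists h; split => //; split => // Hl.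
  apply/eqP; rewrite -leqn0; apply: Hmin => j n _; apply: sx => -[_ [j' [_ Hs]]].
  by move/negP: Hl; apply; apply/mapP; exists (l, j').
exists (fun l => proj1_sig (constructive_indefinite_description _ (HB l))).
split; first split.
- move=> l j n; case: (constructive_indefinite_description _ (HB l)) => h [Bh _] /=.
  exact: Bh.
- move=> l; case: (constructive_indefinite_description _ (HB l)) => h [Bh [Hmin _]] /= Hh.
  apply: NNPP => H.
  have : B l h.-1.
    move=> j n; rewrite leq_eqVlt => /orP [/eqP <- | Hj].
      by apply: NNPP => H2; apply: H; exists n.
    by apply: Bh; rewrite -(prednK Hh).
  move/Hmin; rewrite -ltnS prednK // ltnn //.
- move=> l Hl; case: (constructive_indefinite_description _ (HB l)) => h [_ [_ H]] /=.
  exact: H.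
Qed.

Section Lattice.
Variable F : subXi.
Hypothesis hF : is_submoduleA F.
Hypothesis hL : forall y, F y -> forall l j n, y l j n <> 0 -> 0 < l <= 1.
Variables (psi : Xi) (k : rat -> nat) (s0 : seq rat).
Hypothesis Fpsi : F psi.
Hypothesis Ppsi : profile psi k.
Hypothesis Ks0 : forall l, l \notin s0 -> k l = 0%N.

Lemma column l0 j : (j <= k l0)%N -> exists m, forall y : Xi,
  (forall l i n, (l <> l0 \/ (j <= i)%N) -> y l i n = 0) ->
  (forall i n, (n < m)%N -> y l0 i n = 0) -> F y.
Proof.
elim: j => [|j IH] Hj.
  exists 0%N => y Y1 _.
  have -> : y = Xi0 by apply: XiE => l i n; apply: Y1; right.
  exact: F0.
have [m' IHm] := IH (ltnW Hj).
pose h' := fun l => if l == l0 then j.+1 else 0%N.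
have Hle : forall l, (h' l <= k l)%N by move=> l; rewrite /h'; case: eqP => // ->.
have [z [Fz Pz]] := reach hF hL s0 Fpsi Ppsi Hle.
have {Pz} [Z1 Z2] : profile z h'.
  apply: (profile_ext Pz) => l; case: ifP => // Hl.
  rewrite Ks0 ?Hl // /h'; case: eqP => // El; subst l.
  by move: Hj; rewrite Ks0 ?Hl.
have hz : (0 < h' l0)%N by rewrite /h' eqxx.
have [v [tv tlow]] := series_order (Z2 l0 hz).
rewrite /h' eqxx /= in tv tlow.
pose U := fun m => z l0 j (m + v)%N.
have U0 : U 0%N != 0 by rewrite /U add0n; apply/eqP.
have [W [W0 HW]] := series_inv U0.
pose z1 : Xi := fun l i n => conv W (z l i) n.
have Fz1 : F z1 by apply: Fconv.
have z1top : forall n, z1 l0 j n = if (v <= n)%N then ((n - v)%N == 0%N)%:R else 0.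
  move=> n; rewrite /z1 (@conv_shift W (z l0 j) U v n); first by case: leqP.
  move=> kk; case: leqP => H; first by rewrite /U subnK.
  exact: tlow.
have z1zero : forall l i n, (h' l <= i)%N -> z1 l i n = 0.
  by move=> l i n H; rewrite /z1 /conv big1 // => ii _; rewrite Z1 // mulr0.
exists (v + m')%N => y Y1 Y2.
pose S := fun n => y l0 j (n + v)%N.
pose y3 : Xi := fun l i n => conv S (z1 l i) n.
have Fy3 : F y3 by apply: Fconv.
have y3top : forall n, y3 l0 j n = y l0 j n.
  move=> n; rewrite /y3 (@conv_shift S (z1 l0 j) (fun kk => (kk == 0)%N%:R) v n).
    case: leqP => H; first by rewrite conv_delta0 /S subnK.
    by rewrite Y2 // (leq_trans H) // leq_addr.
  exact: z1top.
have y3low : forall l i n, (n < m')%N -> y3 l i n = 0.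
  move=> l i n Hn; rewrite /y3 /conv big1 // => nu _; rewrite /S Y2 ?mul0r //.
  by rewrite addnC ltn_add2l (leq_ltn_trans _ Hn) // -ltnS.
have y3zero : forall l i n, (l <> l0 \/ (j < i)%N) -> y3 l i n = 0.
  move=> l i n [H|H]; rewrite /y3 /conv big1 // => nu _; rewrite z1zero ?mulr0 //.
    by rewrite /h'; case: eqP.
  by rewrite /h'; case: eqP.
pose y4 : Xi := fun l i n => y l i n - y3 l i n.
have Fy4 : F y4.
  apply: IHm.
    move=> l i n [H|H]; rewrite /y4.
      by rewrite Y1 ?y3zero ?subrr //; left.
    case: (eqVneq l l0) => [El|ne]; last by rewrite Y1 ?y3zero ?subrr //; left; apply/eqP.
    subst l; case: (eqVneq i j) => [-> | nij]; first by rewrite y3top subrr.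
    have Hji : (j < i)%N by rewrite ltn_neqAle eq_sym nij H.
    by rewrite Y1 ?y3zero ?subrr //; right.
  move=> i n Hn; rewrite /y4 y3low // Y2 ?subrr //.
  exact: leq_trans Hn (leq_addl _ _).
have -> : y = Xiadd y3 y4 by apply: XiE => l i n; rewrite /Xiadd /y4 addrC subrK.
exact: Fadd.
Qed.

Lemma lattice : exists M, forall y : Xi,
  (forall l i n, (k l <= i)%N -> y l i n = 0) ->
  (forall l i n, (n < M)%N -> y l i n = 0) -> F y.
Proof.
suff : forall s : seq rat, exists M, forall y : Xi,
  (forall l i n, ((k l <= i)%N \/ l \notin s) -> y l i n = 0) ->
  (forall l i n, (n < M)%N -> y l i n = 0) -> F y.
  case/(_ s0) => M HM; exists M => y Y1 Y2; apply: HM => // l i n [H|H].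
    exact: Y1.
  by apply: Y1; rewrite Ks0.
elim => [|l0 s [M1 IH]].
  exists 0%N => y Y1 _.
  have -> : y = Xi0 by apply: XiE => l i n; apply: Y1; right.
  exact: F0.
have [m Hm] := column (leqnn (k l0)).
exists (maxn M1 m) => y Y1 Y2.
pose col : Xi := fun l i n => if l == l0 then y l i n else 0.
pose rest : Xi := fun l i n => if l == l0 then 0 else y l i n.
have -> : y = Xiadd col rest.
  by apply: XiE => l i n; rewrite /Xiadd /col /rest; case: eqP; rewrite ?addr0 ?add0r.
apply: Fadd => //.
  apply: Hm.
    move=> l i n [H|H]; rewrite /col; case: eqP => // El; subst l.
    by apply: Y1; left.
  move=> i n Hn; rewrite /col eqxx Y2 //.
  by rewrite (leq_trans Hn) // leq_maxr.
apply: IH.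
  move=> l i n [H|H]; rewrite /rest; case: eqP => // /eqP ne.
    by apply: Y1; left.
  by apply: Y1; right; rewrite in_cons negb_or ne.
move=> l i n Hn; rewrite /rest; case: eqP => // _; rewrite Y2 //.
by rewrite (leq_trans Hn) // leq_maxl.
Qed.
End Lattice.


Lemma opb_inj x y : opb x = opb y -> x = y.
Proof.
move=> E; apply: XiE => l j n.
by have := congr1 (fun w : Xi => w l j n.+1) E.
Qed.

Lemma norm_step (F E : subXi) M x :
  normal_in F E -> (forall x, E x -> E (opb x)) -> E x -> F (iter M opb x) -> F x.
Proof.
move=> hN hE; elim: M x => [|M IH] x Ex //.
rewrite iterSr => /(IH _ (hE _ Ex)) Fbx.
have [y [Fy Ey]] : exists y, F y /\ opb x = opb y.
  by apply/hN; split => //; exists x.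
by rewrite (opb_inj Ey).
Qed.

Lemma dclosed_box (k : rat -> nat) : dclosed (fun l j => (j < k l)%N).
Proof. by move=> l j /ltnW. Qed.

Theorem theorem3p3 (phi : Xi) (F : subXi) :
  inXi phi ->
  sub_incl F (genA phi) ->
  is_submoduleA F ->
  monogenic F ->
  is_theme F /\ (normal_in F (genA phi) -> quotient_is_theme (genA phi) F).
Proof.
move=> hphi hsub hF [psi [Fpsi HF]].
have [s Hs] := inXi_supp hphi.
have Esupp : forall x, genA phi x -> supp (Pd s) x.
  by move=> x [u ->]; apply: supp_actA => //; exact: dclosed_Pd.
have hL : forall y, F y -> forall l j n, y l j n <> 0 -> 0 < l <= 1.
  move=> y Fy l j n Hy; apply: NNPP => Hl; apply: Hy.
  by apply: (Esupp _ (hsub _ Fy)) => -[H _]; apply: Hl; rewrite H.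
have spsi : supp (Pd s) psi := Esupp _ (hsub _ Fpsi).
split.
  exists psi; split; first exact: supp_inXi spsi.
  exists id; split; first by move=> x /HF.
  split; first by move=> y /HF Fy; exists y.
  split; first by [].
  by split.
move=> hN.
have [k [Pk Kz]] := exists_profile spsi.
have Fbox : forall x, F x -> supp (fun l j => (j < k l)%N) x.
  move=> x /HF [u ->]; apply: supp_actA; first exact: dclosed_box.
  by move=> l j n H; apply: Pk.1; rewrite leqNgt; apply/negP.
exists (Tk k phi); split.
  apply: (@supp_inXi s) => l j n nP; apply: Hs => -[Hl [j' [le Hin]]]; apply: nP.
  by split => //; exists j'; split => //; exact: leq_trans (leq_addr _ _) le.
exists (Tk k); split.
  by move=> x [u ->]; exists u; rewrite T_actA.
split.
  by move=> y [u ->]; exists (actA u phi); split; [exists u | rewrite T_actA].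
split; last first.
  by split; [move=> x y _ _; apply: T_add | move=> u x _; apply: T_actA].
move=> x Ex; split; last first.
  move=> Fx; apply: XiE => l j n; rewrite /Tk /Xi0; apply: (Fbox _ Fx).
  by apply/negP; rewrite -leqNgt leq_addl.
move=> Tx.
have xbox : forall l i n, (k l <= i)%N -> x l i n = 0.
  move=> l i n H; have := congr1 (fun w : Xi => w l (i - k l)%N n) Tx.
  by rewrite /Tk /Xi0 subnK.
have [M HM] := lattice hF hL Fpsi Pk (s0 := map fst s) Kz.
apply: (@norm_step F (genA phi) M x hN (fun x => @genA_opb phi x) Ex).
apply: HM.
  move=> l i n H; apply: (@supp_iter_opb (fun l j => (j < k l)%N) M x _ l i n).
  by move=> l' j' n' H'; apply: xbox; rewrite leqNgt; apply/negP.
  by apply/negP; rewrite -leqNgt.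
exact: low_iter_opb.
Qed.
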